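(* Let $\psi(u,v)$ be a $C^2$ function on $\mathbb R^2$ and $g(x)=\psi(|x|^2,|x|_{-1}^2)$ for $x\in\mathbb R^N$. Then for every $\varepsilon>0$ and $x\in\mathbb R^N$, $$\widetilde{\mathcal L}^\varepsilon g(x)=\widetilde Lg(x)=2a\Big(\sum_\ell\lambda_\ell(1+\delta_\ell)x_\ell^2\,\partial_u^2\psi+2\sum_\ell(1+\delta_\ell)x_\ell^2\,\partial_u\partial_v\psi+\sum_\ell\tfrac1{\lambda_\ell}(1+\delta_\ell)x_\ell^2\,\partial_v^2\psi\Big)+\Big(a\sum_\ell\lambda_\ell(1+\delta_\ell)-2\sum_\ell\lambda_\ell x_\ell^2\Big)\partial_u\psi+\Big(a\sum_\ell(1+\delta_\ell)-2\sum_\ell x_\ell^2\Big)\partial_v\psi,$$ with derivatives of $\psi$ evaluated at $(u,v)=(|x|^2,|x|_{-1}^2)$. Moreover, if $g_0(x)=\exp\{|x|_{-1}^2/(2a)\}$, then for every $\varepsilon>0$ and $x\in\mathbb R^N$, $$\widetilde{\mathcal L}^\varepsilon g_0(x)\le-\frac{aN-|x|^2}{2a}\,e^{|x|_{-1}^2/2a}\le\frac N2e^{N/2}.$$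
   Context: Let $n\ge4$, $N=2n$, $1=\lambda_1=\lambda_2<\lambda_3=\lambda_4<\dots<\lambda_{N-1}=\lambda_N$. On $\mathbb R^N$: $\langle x,y\rangle=\sum x_\ell y_\ell$, $|x|^2=\sum x_\ell^2$, $\langle x,y\rangle_{-1}=\sum x_\ell y_\ell/\lambda_\ell$, $|x|_{-1}^2=\sum x_\ell^2/\lambda_\ell$. Fix $a>0$, $\delta_\ell\in(-1,0]$ with $\delta_{2i}=\delta_{2i-1}$, and $\widetilde L=\sum_\ell\lambda_\ell(\tfrac a2(1+\delta_\ell)\partial_\ell^2-x_\ell\partial_\ell)$. Let $b$ be a vector field on $\mathbb R^N$ with each $b(x)_\ell$ a quadratic form in $x$, $\operatorname{div}b=0$, $\langle x,b(x)\rangle=0=\langle x,b(x)\rangle_{-1}$ for all $x$; $B=\sum b(x)_\ell\partial_\ell$. With $\mathcal J$ the set of triples $J=(k,\ell,m)$ in $\{1,\dots,N\}$ with $\lambda_k<\lambda_\ell<\lambda_m$, let $T_J=\sum x_ax_b(1/\lambda_a-1/\lambda_b)\partial_c$ (sum over the three cyclic permutations $(a,b,c)$ of $J$), and $R_i=x_{2i}\partial_{2i-1}-x_{2i-1}\partial_{2i}$, $1\le i\le n$; enumerate these vector fields as $Z_1,\dots,Z_M$ and set $\mathcal D=\frac12\sum_mZ_m^2$. Fix $\kappa\in(0,1]$, and for $\varepsilon>0$ set $\widetilde{\mathcal L}^\varepsilon=\widetilde L+\varepsilon^{-1}(B+\kappa\mathcal D)$. *)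

(* Defs.v *)
(* R : realType, vectors of R^m are
   row vectors 'rV[R]_m, partial derivatives are directional derivatives
   along the canonical basis vectors 'e_l = delta_mx 0 l. *)
From mathcomp Require Import all_boot all_order all_algebra.
From mathcomp Require Import all_classical all_reals all_analysis.
Set Implicit Arguments.
Unset Strict Implicit.
Unset Printing Implicit Defensive.
Import Order.TTheory GRing.Theory Num.Theory numFieldNormedType.Exports.
Local Open Scope ring_scope.

Section Defs.
Variable R : realType.

Definition xcomp (m : nat) (x : 'rV[R]_m) (l : 'I_m) : R := x ord0 l.

Definition pd (m : nat) (f : 'rV[R]_m -> R) (l : 'I_m) : 'rV[R]_m -> R :=
  fun x => 'D_('e_l) f x.

Definition sqn (m : nat) (x : 'rV[R]_m) : R := \sum_(l < m) xcomp x l ^+ 2.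
Definition sqnm1 (m : nat) (lam : 'I_m -> R) (x : 'rV[R]_m) : R :=
  \sum_(l < m) xcomp x l ^+ 2 / lam l.

Definition isC2 (m : nat) (f : 'rV[R]_m -> R) : Prop :=
  [/\ forall p, differentiable f p,
      forall (i : 'I_m) p, differentiable (pd f i) p
    & forall i j : 'I_m, continuous (pd (pd f i) j)].

Definition vf (m : nat) (z : 'rV[R]_m -> 'I_m -> R) (f : 'rV[R]_m -> R)
  : 'rV[R]_m -> R :=
  fun x => \sum_(c < m) z x c * pd f c x.

(* ---- the pairing of indices : 0-based indices 2i and 2i+1 of 'I_(2n)
   (= 1-based indices 2i-1 and 2i) ---- *)
Lemma pfst_proof (n : nat) (i : 'I_n) : (i.*2 < n.*2)%N.
Proof. by rewrite ltn_double. Qed.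
Lemma psnd_proof (n : nat) (i : 'I_n) : (i.*2.+1 < n.*2)%N.
Proof. by rewrite -doubleS leq_double. Qed.
Definition pfst (n : nat) (i : 'I_n) : 'I_(n.*2) := Ordinal (pfst_proof i).
Definition psnd (n : nat) (i : 'I_n) : 'I_(n.*2) := Ordinal (psnd_proof i).

Definition Tfield (N : nat) (lam : 'I_N -> R) (k l m : 'I_N)
  : 'rV[R]_N -> 'I_N -> R :=
  fun x c =>
      (if c == m then xcomp x k * xcomp x l * (lam k)^-1 - xcomp x k * xcomp x l * (lam l)^-1 else 0)
    + (if c == k then xcomp x l * xcomp x m * (lam l)^-1 - xcomp x l * xcomp x m * (lam m)^-1 else 0)
    + (if c == l then xcomp x m * xcomp x k * (lam m)^-1 - xcomp x m * xcomp x k * (lam k)^-1 else 0).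

Definition Rfield (n : nat) (i : 'I_n) : 'rV[R]_(n.*2) -> 'I_(n.*2) -> R :=
  fun x c =>
    (if c == pfst i then xcomp x (psnd i) else 0)
  - (if c == psnd i then xcomp x (pfst i) else 0).

Definition Dop (n : nat) (lam : 'I_(n.*2) -> R) (f : 'rV[R]_(n.*2) -> R)
  : 'rV[R]_(n.*2) -> R :=
  fun x => 2^-1 *
    ( \sum_(k < n.*2) \sum_(l < n.*2) \sum_(m < n.*2 | (lam k < lam l) && (lam l < lam m))
         vf (Tfield lam k l m) (vf (Tfield lam k l m) f) x
    + \sum_(i < n) vf (Rfield i) (vf (Rfield i) f) x ).

Definition Ltil (N : nat) (a : R) (lam del : 'I_N -> R) (f : 'rV[R]_N -> R)
  : 'rV[R]_N -> R :=
  fun x => \sum_(l < N) lam l *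
    (a / 2 * (1 + del l) * pd (pd f l) l x - xcomp x l * pd f l x).

Definition Bop (N : nat) (b : 'rV[R]_N -> 'rV[R]_N) (f : 'rV[R]_N -> R)
  : 'rV[R]_N -> R := vf (fun x l => xcomp (b x) l) f.

Definition Leps (n : nat) (a : R) (lam del : 'I_(n.*2) -> R)
  (b : 'rV[R]_(n.*2) -> 'rV[R]_(n.*2)) (kappa eps : R)
  (f : 'rV[R]_(n.*2) -> R) : 'rV[R]_(n.*2) -> R :=
  fun x => Ltil a lam del f x + eps^-1 * (Bop b f x + kappa * Dop lam f x).

Definition iu : 'I_2 := ord0.
Definition iv : 'I_2 := ord_max.
Definition pt2 (u v : R) : 'rV[R]_2 := \row_(k < 2) (if k == iu then u else v).

End Defs.

(* Main.v *)
Require Import Defs.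
From mathcomp Require Import all_boot all_order all_algebra.
From mathcomp Require Import all_classical all_reals all_analysis.
From mathcomp Require Import ring lra.
Import Order.TTheory GRing.Theory Num.Theory numFieldNormedType.Exports.
Local Open Scope ring_scope.

Module Helpers.
Set Implicit Arguments. Unset Strict Implicit.

Section Aux.
Variable R : realType.

Lemma coord_is_derive m (x v : 'rV[R]_m) k :
  is_derive x v (fun y : 'rV[R]_m => xcomp y k) (v ord0 k).
Proof.
have dI := @derivable_id R _ x v.
have h1 := (derivable_mxP _ _ _).1 dI ord0 k.
apply: DeriveDef => //.
have := derive_mx dI; rewrite derive_id => /(congr1 (fun M : 'M[R]_(1,m) => M ord0 k)).
by rewrite mxE => ->.
Qed.

Lemma pt2_u (u v : R) : pt2 u v ord0 iu = u.
Proof. by rewrite mxE. Qed.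
Lemma pt2_v (u v : R) : pt2 u v ord0 iv = v.
Proof. by rewrite mxE. Qed.

Lemma pt2_dec (u v : R) : pt2 u v = u *: 'e_iu + v *: 'e_iv.
Proof.
apply/rowP => k; rewrite !mxE /=.
case: k => [[|[|k]] hk] //=; rewrite /iu /iv /=.
- by rewrite mulr1 mulr0 addr0.
- by rewrite mulr0 mulr1 add0r.
Qed.

End Aux.

Section Aux2.
Variable R : realType.

Lemma chain2 m (s1 s2 : 'rV[R]_m -> R) (h : 'rV[R]_2 -> R) x v :
  differentiable s1 x -> differentiable s2 x ->
  differentiable h (pt2 (s1 x) (s2 x)) ->
  is_derive x v (fun y => h (pt2 (s1 y) (s2 y)))
    ('D_v s1 x * pd h iu (pt2 (s1 x) (s2 x)) + 'D_v s2 x * pd h iv (pt2 (s1 x) (s2 x))).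
Proof.
move=> d1 d2 dh.
set Q := fun y => pt2 (s1 y) (s2 y).
have QE : Q = (fun y => s1 y *: 'e_iu) + (fun y => s2 y *: 'e_iv).
  by apply/funext => y; rewrite /Q pt2_dec.
have dQ : differentiable Q x.
  rewrite QE; apply: differentiableD; exact: differentiableZl.
have dhQ : differentiable (h \o Q) x by apply: differentiable_comp.
apply: DeriveDef; first exact: diff_derivable.
rewrite (_ : (fun y => h (pt2 (s1 y) (s2 y))) = h \o Q) //.
rewrite deriveE // diff_comp // /=.
have -> : 'd Q x v = 'D_v Q x by rewrite deriveE.
rewrite derive_mx; last exact: diff_derivable.
have -> : \matrix_(i < 1, j < 2) 'D_v (fun t => Q t i j) x = pt2 ('D_v s1 x) ('D_v s2 x).
  apply/matrixP => i j; rewrite !mxE.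
  case E: (j == iu).
    by congr ('D_v _ x); apply/funext => t; rewrite /Q mxE E.
  by congr ('D_v _ x); apply/funext => t; rewrite /Q mxE E.
rewrite pt2_dec linearD !linearZ /= /pd -!deriveE //.
Qed.

End Aux2.

Section Aux3.
Variable R : realType.

Lemma wsq_fun m (c : 'I_m -> R) :
  (fun y : 'rV[R]_m => \sum_(l < m) xcomp y l ^+ 2 * c l) =
  \sum_(l < m) ((fun y => xcomp y l) * (fun y => xcomp y l) * (fun=> c l)).
Proof. by rewrite fct_sumE; apply/funext => y; apply: eq_bigr => l _. Qed.

Lemma wsq_diff m (c : 'I_m -> R) x :
  differentiable (fun y : 'rV[R]_m => \sum_(l < m) xcomp y l ^+ 2 * c l) x.
Proof.
rewrite wsq_fun; apply: differentiable_sum => l.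
apply: differentiableM; last exact: differentiable_cst.
by apply: differentiableM; apply: differentiable_coord.
Qed.

Lemma wsq_der m (c : 'I_m -> R) (x v : 'rV[R]_m) :
  is_derive x v (fun y : 'rV[R]_m => \sum_(l < m) xcomp y l ^+ 2 * c l)
    (\sum_(l < m) 2 * xcomp x l * v ord0 l * c l).
Proof.
rewrite wsq_fun; apply: is_derive_eq.
  apply: is_derive_sum => l; have H := (is_deriveM (is_deriveM (coord_is_derive x v l) (coord_is_derive x v l)) (@is_derive_cst _ _ _ (c l) x v)).
  exact: H.
apply: eq_bigr => l _ /=.
rewrite scaler0 add0r /GRing.scale /=; ring.
Qed.

End Aux3.

Lemma dval (K : numFieldType) (V W : normedModType K) (a v : V) (f : V -> W) (df : W) :
  is_derive a v f df -> 'D_v f a = df.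
Proof. by move=> H; apply: derive_val. Qed.
Lemma dable (K : numFieldType) (V W : normedModType K) (a v : V) (f : V -> W) (df : W) :
  is_derive a v f df -> derivable f a v.
Proof. by case. Qed.

Section Aux4.
Variable R : realType.

Lemma sqnE m : sqn (R:=R) (m:=m) = (fun y => \sum_(l < m) xcomp y l ^+ 2 * 1).
Proof. by apply/funext => y; rewrite /sqn; apply: eq_bigr => l _; rewrite mulr1. Qed.

Lemma wsq_pd m (c : 'I_m -> R) (x : 'rV[R]_m) k :
  is_derive x 'e_k (fun y : 'rV[R]_m => \sum_(l < m) xcomp y l ^+ 2 * c l)
    (2 * xcomp x k * c k).
Proof.
apply: is_derive_eq; first exact: wsq_der.
rewrite (bigD1 k) //= big1 ?addr0; first by rewrite mxE !eqxx mulr1.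
by move=> l /negbTE nl; rewrite mxE eq_sym nl andbF mulr0 mul0r.
Qed.

Lemma sqn_diff m (x : 'rV[R]_m) : differentiable (@sqn R m) x.
Proof. by rewrite sqnE; apply: wsq_diff. Qed.
Lemma sqnm1_diff m lam (x : 'rV[R]_m) : differentiable (@sqnm1 R m lam) x.
Proof. exact: (wsq_diff (fun l => (lam l)^-1)). Qed.

Lemma sqn_pd m (x : 'rV[R]_m) k : 'D_('e_k) (@sqn R m) x = 2 * xcomp x k.
Proof. by rewrite sqnE (dval (wsq_pd _ x k)) mulr1. Qed.
Lemma sqnm1_pd m lam (x : 'rV[R]_m) k :
  'D_('e_k) (@sqnm1 R m lam) x = 2 * xcomp x k * (lam k)^-1.
Proof. exact: (dval (wsq_pd (fun l => (lam l)^-1) x k)). Qed.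

Lemma comp_pd m lam (h : 'rV[R]_2 -> R) (dh : forall p, differentiable h p)
  (x : 'rV[R]_m) k :
  is_derive x 'e_k (fun y => h (pt2 (sqn y) (sqnm1 lam y)))
    (2 * xcomp x k * pd h iu (pt2 (sqn x) (sqnm1 lam x))
     + 2 * xcomp x k * (lam k)^-1 * pd h iv (pt2 (sqn x) (sqnm1 lam x))).
Proof.
apply: is_derive_eq.
  apply: chain2 => //; [exact: sqn_diff | exact: sqnm1_diff].
by rewrite sqn_pd sqnm1_pd.
Qed.

Lemma comp_pdE m lam (h : 'rV[R]_2 -> R) (dh : forall p, differentiable h p) k :
  pd (fun y : 'rV[R]_m => h (pt2 (sqn y) (sqnm1 lam y))) k =
  fun x => 2 * xcomp x k * pd h iu (pt2 (sqn x) (sqnm1 lam x))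
     + 2 * xcomp x k * (lam k)^-1 * pd h iv (pt2 (sqn x) (sqnm1 lam x)).
Proof. by apply/funext => x; rewrite /pd (dval (comp_pd lam dh x k)). Qed.

End Aux4.

Section Aux5.
Variable R : realType.

Lemma comp_pd2 m lam (h : 'rV[R]_2 -> R) (d1 : forall p, differentiable h p)
  (d2 : forall i p, differentiable (pd h i) p) (x : 'rV[R]_m) k :
  pd (pd (fun y : 'rV[R]_m => h (pt2 (sqn y) (sqnm1 lam y))) k) k x =
  2 * pd h iu (pt2 (sqn x) (sqnm1 lam x))
  + 2 * xcomp x k * (2 * xcomp x k * pd (pd h iu) iu (pt2 (sqn x) (sqnm1 lam x))
                     + 2 * xcomp x k * (lam k)^-1 * pd (pd h iu) iv (pt2 (sqn x) (sqnm1 lam x)))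
  + 2 * (lam k)^-1 * pd h iv (pt2 (sqn x) (sqnm1 lam x))
  + 2 * xcomp x k * (lam k)^-1 * (2 * xcomp x k * pd (pd h iv) iu (pt2 (sqn x) (sqnm1 lam x))
                     + 2 * xcomp x k * (lam k)^-1 * pd (pd h iv) iv (pt2 (sqn x) (sqnm1 lam x))).
Proof.
rewrite (comp_pdE lam d1 k).
set A := fun y : 'rV[R]_m => pd h iu (pt2 (sqn y) (sqnm1 lam y)).
set B := fun y : 'rV[R]_m => pd h iv (pt2 (sqn y) (sqnm1 lam y)).
have -> : (fun x0 : 'rV[R]_m => 2 * xcomp x0 k * pd h iu (pt2 (sqn x0) (sqnm1 lam x0)) +
    2 * xcomp x0 k * (lam k)^-1 * pd h iv (pt2 (sqn x0) (sqnm1 lam x0))) =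
  (cst 2 * (fun y => xcomp y k)) * A + (cst (2 * (lam k)^-1) * (fun y => xcomp y k)) * B.
  by rewrite !mulrfctE addrfctE; apply/funext => y /=; rewrite /A /B; ring.
rewrite /pd (dval (is_deriveD
  (is_deriveM (is_deriveM (@is_derive_cst R _ R 2 x 'e_k) (coord_is_derive x 'e_k k))
     (comp_pd lam (d2 iu) x k))
  (is_deriveM (is_deriveM (@is_derive_cst R _ R (2 * (lam k)^-1) x 'e_k) (coord_is_derive x 'e_k k))
     (comp_pd lam (d2 iv) x k)))).
have sE : forall a b : R, a *: b = a * b by [].
rewrite !mulrfctE !scaler0 !addr0 !sE !mxE !eqxx !mulr1 /cst /pd.
move: (xcomp x k) (lam k)^-1 ('D_'e_iu h _) ('D_'e_iv h _) ('D_'e_iu ('D_'e_iu h) _)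
  ('D_'e_iv ('D_'e_iu h) _) ('D_'e_iu ('D_'e_iv h) _) ('D_'e_iv ('D_'e_iv h) _).
move=> *.
ring.
Qed.

End Aux5.

Section ClassicalScope_F.
Local Open Scope classical_set_scope.
Local Open Scope ring_scope.

Section Aux6.
Variable R : realType.
Implicit Types (F : 'rV[R]_2 -> R) (q u w : 'rV[R]_2).

Lemma line_der F q v t : derivable F (q + t *: v) v ->
  is_derive t 1 (fun s : R => F (q + s *: v)) ('D_v F (q + t *: v)).
Proof.
move=> dF.
have EF : (fun h : R => h^-1 *: (((fun s : R => F (q + s *: v)) \o shift t) (h *: 1)
             - (fun s : R => F (q + s *: v)) t)) =
          (fun h : R => h^-1 *: ((F \o shift (q + t *: v)) (h *: v) - F (q + t *: v))).
  apply/funext => h /=; congr (_ *: (F _ - _)).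
  by rewrite scalerDl [h *: 1]mulr1 addrCA addrC.
apply: DeriveDef; first by rewrite /derivable EF.
by rewrite /derive EF.
Qed.

Lemma mixed F u w (h : R) p :
  (forall q, derivable F q u) -> (forall q, derivable ('D_u F) q w) -> 0 < h ->
  exists2 xi, xi \in `]0, h[ & exists2 eta, eta \in `]0, h[ &
   F (p + h *: w + h *: u) - F (p + h *: u) - F (p + h *: w) + F p =
   h ^+ 2 * 'D_w ('D_u F) (p + xi *: u + eta *: w).
Proof.
move=> dF dG hp.
pose f1 := fun s : R => F (p + h *: w + s *: u).
pose f2 := fun s : R => F (p + s *: u).
pose dphi := fun t : R => 'D_u F (p + h *: w + t *: u) - 'D_u F (p + t *: u).
have dphiE : forall t : R, is_derive t (1:R) (f1 - f2) (dphi t).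
  move=> t; apply: is_deriveB; [exact: line_der | exact: line_der].
have cphi : {within `[0, h], continuous (f1 - f2)}.
  apply: continuous_subspaceT => t; apply: differentiable_continuous.
  by apply/derivable1_diffP; exact: dable (dphiE t).
have [xi xiI Exi] := MVT hp (fun t _ => dphiE t) cphi.
exists xi => //.
pose chi := fun s : R => 'D_u F (p + xi *: u + s *: w).
have dchi : forall s : R, is_derive s (1:R) chi ('D_w ('D_u F) (p + xi *: u + s *: w)).
  by move=> s; apply: line_der.
have cchi : {within `[0, h], continuous chi}.
  apply: continuous_subspaceT => t; apply: differentiable_continuous.
  by apply/derivable1_diffP; exact: dable (dchi t).
have [eta etaI Eeta] := MVT hp (fun t _ => dchi t) cchi.
exists eta => //.
move: Exi Eeta; rewrite /f1 /f2 /dphi /chi /= !scale0r !addr0 subr0 => Exi Eeta.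
have E1 : F (p + h *: w + h *: u) - F (p + h *: u) - (F (p + h *: w + 0 *: u) - F (p + 0 *: u))
   = ('D_u F (p + h *: w + xi *: u) - 'D_u F (p + xi *: u)) * h by exact: Exi.
rewrite !scale0r !addr0 in E1.
rewrite (_ : p + h *: w + xi *: u = p + xi *: u + h *: w) in E1; last by rewrite addrAC.
rewrite Eeta in E1.
apply: (@eq_trans _ _ (F (p + h *: w + h *: u) - F (p + h *: u) - (F (p + h *: w) - F p))).
  by rewrite opprB addrA addrAC.
rewrite E1; ring.
Qed.

End Aux6.

End ClassicalScope_F.

Section ClassicalScope_G.
Local Open Scope classical_set_scope.
Local Open Scope ring_scope.

Section Aux7.
Variable R : realType.

Lemma near_delta (f : 'rV[R]_2 -> R) p (eps : R) : {for p, continuous f} -> 0 < eps ->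
  exists2 d : R, 0 < d & forall q, `|p - q| < d -> `|f p - f q| < eps.
Proof.
move=> cf ep; move/cvgrPdist_lt : cf => /(_ eps ep).
by move/nbhs_normP => [d /= dp B]; exists d.
Qed.

Lemma dist_bound (p : 'rV[R]_2) u w (xi eta hh : R) :
  0 < xi < hh -> 0 < eta < hh ->
  `|p - (p + xi *: u + eta *: w)| <= hh * (`|u| + `|w|).
Proof.
move=> /andP[x0 xh] /andP[e0 eh].
rewrite -addrA opprD addrA subrr add0r normrN.
apply: (le_trans (ler_normD _ _)); rewrite !normrZ !gtr0_norm // mulrDr.
by apply: lerD; apply: ler_wpM2r => //; apply: ltW.
Qed.

Lemma schwarz (h : 'rV[R]_2 -> R) : isC2 h ->
  forall p, pd (pd h iu) iv p = pd (pd h iv) iu p.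
Proof.
case=> d1 d2 c2 p.
set f12 := pd (pd h iu) iv; set f21 := pd (pd h iv) iu.
case: (eqVneq (f12 p - f21 p) 0) => [/eqP|dn0]; first by rewrite subr_eq0 => /eqP.
set eps := `|f12 p - f21 p| / 2.
have ep : 0 < eps by rewrite divr_gt0 // normr_gt0.
have [dl1 dl1p B1] := near_delta (c2 iu iv p) ep.
have [dl2 dl2p B2] := near_delta (c2 iv iu p) ep.
set C := `|('e_iu : 'rV[R]_2)| + `|('e_iv : 'rV[R]_2)|.
have C0 : 0 <= C by rewrite addr_ge0.
set hh := Order.min dl1 dl2 / (2 * (C + 1)).
have hp : 0 < hh by rewrite divr_gt0 // ?lt_min ?dl1p ?dl2p // mulr_gt0 // ltr_wpDl.
have hC : hh * C < Order.min dl1 dl2.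
  rewrite /hh mulrAC ltr_pdivrMr ?mulr_gt0 ?ltr_wpDl //.
  have mp : 0 < Order.min dl1 dl2 by rewrite lt_min dl1p dl2p.
  rewrite (ltr_pM2l mp); lra.
have dU : forall q, derivable h q 'e_iu by move=> q; exact: diff_derivable.
have dV : forall q, derivable h q 'e_iv by move=> q; exact: diff_derivable.
have dUV : forall q, derivable ('D_'e_iu h) q 'e_iv.
  by move=> q; exact: diff_derivable (d2 iu q).
have dVU : forall q, derivable ('D_'e_iv h) q 'e_iu.
  by move=> q; exact: diff_derivable (d2 iv q).
have [xi xiI [eta etaI E1]] := mixed p dU dUV hp.
have [xi' xiI' [eta' etaI' E2]] := mixed p dV dVU hp.
rewrite !in_itv /= in xiI etaI xiI' etaI'.
set A := p + xi *: 'e_iu + eta *: 'e_iv.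
set B := p + xi' *: 'e_iv + eta' *: 'e_iu.
have E1' : h (p + hh *: 'e_iv + hh *: 'e_iu) - h (p + hh *: 'e_iu) - h (p + hh *: 'e_iv) + h p
   = hh ^+ 2 * f12 A := E1.
have E2' : h (p + hh *: 'e_iu + hh *: 'e_iv) - h (p + hh *: 'e_iv) - h (p + hh *: 'e_iu) + h p
   = hh ^+ 2 * f21 B := E2.
have EQ : f12 A = f21 B.
  have hn : hh ^+ 2 != 0 by rewrite expf_neq0 // gt_eqF.
    have Lq : h (p + hh *: 'e_iv + hh *: 'e_iu) - h (p + hh *: 'e_iu) - h (p + hh *: 'e_iv) + h p
      = h (p + hh *: 'e_iu + hh *: 'e_iv) - h (p + hh *: 'e_iv) - h (p + hh *: 'e_iu) + h p.
    rewrite (addrAC p (hh *: 'e_iv)).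
        congr (_ + _); exact: addrAC.
    have : hh ^+ 2 * f12 A = hh ^+ 2 * f21 B := etrans (esym E1') (etrans Lq E2').
  by move/(mulfI hn).
have D1 := dist_bound p 'e_iu 'e_iv xiI etaI.
have D2 := dist_bound p 'e_iv 'e_iu xiI' etaI'.
have L1 : `|f12 p - f12 (p + xi *: 'e_iu + eta *: 'e_iv)| < eps.
  apply: B1; apply: (le_lt_trans D1); apply: (lt_le_trans hC); by rewrite ge_min lexx.
have L2 : `|f21 p - f21 (p + xi' *: 'e_iv + eta' *: 'e_iu)| < eps.
  apply: B2. apply: (le_lt_trans D2). rewrite addrC. apply: (lt_le_trans hC). by rewrite ge_min lexx orbT.
have Hlt : `|f12 p - f21 p| < eps + eps.
  have -> : f12 p - f21 p = (f12 p - f12 A) - (f21 p - f21 B).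
    rewrite EQ; move: (f12 p) (f21 p) (f21 B) => a b c.
    by rewrite opprB addrA subrK.
  apply: (le_lt_trans (ler_normB _ _)). exact: (ltrD L1 L2).
move: Hlt; rewrite /eps -splitr ltxx => H; discriminate H.
Qed.

End Aux7.

End ClassicalScope_G.

Section ClassicalScope_H.
Local Open Scope classical_set_scope.
Local Open Scope ring_scope.

Section Aux8.
Variable R : realType.
Lemma sE (x y : R) : x *: y = x * y. Proof. by []. Qed.

Lemma exp_comp_der m (s : 'rV[R]_m -> R) p w : differentiable s p ->
  is_derive p w (fun q => expR (s q)) ('D_w s p * expR (s p)).
Proof.
move=> ds.
have de : differentiable (@expR R) (s p) by apply/derivable1_diffP; exact: derivable_expR.
have dc : differentiable ((@expR R) \o s) p by apply: differentiable_comp.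
apply: DeriveDef; first exact: diff_derivable.
rewrite (_ : (fun q => expR (s q)) = (@expR R) \o s) //.
rewrite deriveE // diff_comp // /=.
rewrite deriv1E; last exact: derivable_expR.
rewrite derive1E (dval (is_derive_expR (s p))).
have -> : 'd s p w = 'D_w s p by rewrite deriveE.
by [].
Qed.

Variable a : R.
Definition psi0 (q : 'rV[R]_2) : R := expR (xcomp q iv / (2 * a)).

Lemma s0_der q w : is_derive q w (fun q : 'rV[R]_2 => xcomp q iv / (2 * a)) (w ord0 iv / (2 * a)).
Proof.
apply: is_derive_eq.
  exact: (is_deriveM (coord_is_derive q w iv) (@is_derive_cst R _ R ((2 * a)^-1) q w)).
by rewrite scaler0 add0r sE /cst mulrC.
Qed.

Lemma s0_diff q : differentiable (fun q : 'rV[R]_2 => xcomp q iv / (2 * a)) q.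
Proof.
apply: (@differentiableM _ _ (fun q : 'rV[R]_2 => xcomp q iv) (cst (2 * a)^-1)).
  exact: differentiable_coord.
exact: differentiable_cst.
Qed.

Lemma psi0_diff q : differentiable psi0 q.
Proof.
apply: (@differentiable_comp _ _ _ _ (fun q : 'rV[R]_2 => xcomp q iv / (2 * a)) (@expR R)).
  exact: s0_diff.
by apply/derivable1_diffP; exact: derivable_expR.
Qed.

Lemma psi0_der q w : is_derive q w psi0 (w ord0 iv / (2 * a) * psi0 q).
Proof.
apply: is_derive_eq; first exact: (exp_comp_der w (s0_diff q)).
by rewrite (dval (s0_der q w)).
Qed.

Lemma cpsi0_der (c : R) q w :
  is_derive q w (fun q => c * psi0 q) (c * (w ord0 iv / (2 * a) * psi0 q)).
Proof.
apply: is_derive_eq.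
  exact: (is_deriveM (@is_derive_cst R _ R c q w) (psi0_der q w)).
by rewrite scaler0 addr0 sE.
Qed.

Lemma cpsi0_diff (c : R) q : differentiable (fun q => c * psi0 q) q.
Proof.
apply: (@differentiableM _ _ (cst c) psi0); first exact: differentiable_cst.
exact: psi0_diff.
Qed.

Lemma psi0_pd i : pd psi0 i = fun q => (('e_i : 'rV[R]_2) ord0 iv / (2 * a)) * psi0 q.
Proof. by apply/funext => q; exact: (dval (psi0_der q _)). Qed.

Lemma psi0_pd2 i j : pd (pd psi0 i) j =
  fun q => (('e_i : 'rV[R]_2) ord0 iv / (2 * a)) * ((('e_j : 'rV[R]_2) ord0 iv / (2 * a)) * psi0 q).
Proof. by rewrite psi0_pd; apply/funext => q; exact: (dval (cpsi0_der _ q _)). Qed.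

Lemma psi0_C2 : isC2 psi0.
Proof.
split.
- exact: psi0_diff.
- by move=> i p; rewrite psi0_pd; exact: cpsi0_diff.
- move=> i j; rewrite psi0_pd2 => p.
  apply: differentiable_continuous.
  apply: (@differentiableM _ _ (cst _) (fun q => _ * psi0 q)).
    exact: differentiable_cst.
  exact: cpsi0_diff.
Qed.

End Aux8.

End ClassicalScope_H.

Section Aux9.
Variable R : realType.

Lemma sum_if1 N (m : 'I_N) (A : R) (w : 'I_N -> R) :
  \sum_(c < N) (if c == m then A else 0) * w c = A * w m.
Proof.
rewrite (bigD1 m) //= eqxx big1 ?addr0 // => c /negbTE ->; exact: mul0r.
Qed.

Lemma vf_comp m lam (h : 'rV[R]_2 -> R) (dh : forall p, differentiable h p)
  (z : 'rV[R]_m -> 'I_m -> R) (x : 'rV[R]_m) :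
  vf z (fun y => h (pt2 (sqn y) (sqnm1 lam y))) x =
  2 * pd h iu (pt2 (sqn x) (sqnm1 lam x)) * (\sum_(c < m) z x c * xcomp x c)
  + 2 * pd h iv (pt2 (sqn x) (sqnm1 lam x)) * (\sum_(c < m) z x c * xcomp x c * (lam c)^-1).
Proof.
rewrite /vf !mulr_sumr -big_split /=; apply: eq_bigr => c _.
rewrite (comp_pdE lam dh).
move: (pd h iu _) (pd h iv _) => U V; ring.
Qed.

Lemma T_sum0 N (lam : 'I_N -> R) k l m (x : 'rV[R]_N) (w : 'I_N -> R) :
  (w = fun c => xcomp x c) \/ (w = fun c => xcomp x c * (lam c)^-1) ->
  \sum_(c < N) Tfield lam k l m x c * w c = 0.
Proof.
move=> hw; rewrite /Tfield.
under eq_bigr do rewrite !mulrDl.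
rewrite !big_split /= !sum_if1.
case: hw => ->; ring.
Qed.

Lemma R_sum0 n (lam : 'I_(n.*2) -> R) i (x : 'rV[R]_(n.*2)) (w : 'I_(n.*2) -> R) :
  lam (pfst i) = lam (psnd i) ->
  (w = fun c => xcomp x c) \/ (w = fun c => xcomp x c * (lam c)^-1) ->
  \sum_(c < n.*2) Rfield i x c * w c = 0.
Proof.
move=> hl hw; rewrite /Rfield.
under eq_bigr do rewrite mulrBl.
rewrite sumrB !sum_if1.
case: hw => ->; last rewrite hl; ring.
Qed.

Lemma T_sum0a N (lam : 'I_N -> R) k l m (x : 'rV[R]_N) :
  \sum_(c < N) Tfield lam k l m x c * xcomp x c = 0.
Proof. exact: (@T_sum0 N lam k l m x _ (or_introl erefl)). Qed.

Lemma T_sum0b N (lam : 'I_N -> R) k l m (x : 'rV[R]_N) :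
  \sum_(c < N) Tfield lam k l m x c * xcomp x c * (lam c)^-1 = 0.
Proof.
rewrite -[RHS](@T_sum0 N lam k l m x _ (or_intror erefl)).
apply: eq_bigr => c _; exact: (esym (mulrA _ _ _)).
Qed.

Lemma R_sum0a n (lam : 'I_(n.*2) -> R) i (x : 'rV[R]_(n.*2)) :
  lam (pfst i) = lam (psnd i) ->
  \sum_(c < n.*2) Rfield i x c * xcomp x c = 0.
Proof. move=> hl; exact: (@R_sum0 n lam i x _ hl (or_introl erefl)). Qed.

Lemma R_sum0b n (lam : 'I_(n.*2) -> R) i (x : 'rV[R]_(n.*2)) :
  lam (pfst i) = lam (psnd i) ->
  \sum_(c < n.*2) Rfield i x c * xcomp x c * (lam c)^-1 = 0.
Proof.
move=> hl; rewrite -[RHS](@R_sum0 n lam i x _ hl (or_intror erefl)).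
apply: eq_bigr => c _; exact: (esym (mulrA _ _ _)).
Qed.

Lemma sum_shape (I : Type) (r : seq I) (A1 A2 A3 A4 A5 A6 A7 : I -> R)
  (a Puu Puv Pvv Pu Pv : R) :
  2 * a * ((\sum_(l <- r) A1 l) * Puu + 2 * (\sum_(l <- r) A2 l) * Puv
           + (\sum_(l <- r) A3 l) * Pvv)
  + (a * (\sum_(l <- r) A4 l) - 2 * \sum_(l <- r) A5 l) * Pu
  + (a * (\sum_(l <- r) A6 l) - 2 * \sum_(l <- r) A7 l) * Pv
  = \sum_(l <- r) (2 * a * (A1 l * Puu + 2 * A2 l * Puv + A3 l * Pvv)
     + (a * A4 l - 2 * A5 l) * Pu + (a * A6 l - 2 * A7 l) * Pv).
Proof.
elim: r => [|y r IH]; first by rewrite !big_nil; ring.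
rewrite !big_cons -IH; ring.
Qed.

Lemma lam_ge1 n (lam : 'I_(n.*2) -> R) :
  (forall i : 'I_n, val i = 0%N -> lam (pfst i) = 1) ->
  (forall i : 'I_n, lam (pfst i) = lam (psnd i)) ->
  (forall i j : 'I_n, val j = (val i).+1 -> lam (psnd i) < lam (pfst j)) ->
  forall l, 1 <= lam l.
Proof.
move=> h0 hp hs.
have H : forall k (hk : (k < n)%N), 1 <= lam (pfst (Ordinal hk)).
  elim=> [|k IH] hk; first by rewrite h0.
  have hk' : (k < n)%N by apply: ltnW.
  apply: (le_trans (IH hk')); apply: ltW; rewrite hp.
  exact: (hs (Ordinal hk') (Ordinal hk)).
move=> l.
have hl : (l./2 < n)%N by rewrite -ltn_double; apply: leq_ltn_trans (ltn_ord l); rewrite -{2}(odd_double_half l) leq_addl.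
case/boolP: (odd l) => ol.
- have -> : l = psnd (Ordinal hl) by apply: val_inj => /=; rewrite -{1}(odd_double_half l) ol.
  by rewrite -hp.
- have -> : l = pfst (Ordinal hl) by apply: val_inj => /=; rewrite -{1}(odd_double_half l) (negbTE ol).
  exact: H.
Qed.

End Aux9.

Section Aux10.
Variable R : realType.
Variable a : R.

Lemma psi0_u P : pd (psi0 a) iu P = 0.
Proof.
rewrite (congr1 (fun f => f P) (psi0_pd a iu)) /= mxE.
by rewrite mul0r mul0r.
Qed.

Lemma psi0_v P : pd (psi0 a) iv P = psi0 a P / (2 * a).
Proof.
rewrite (congr1 (fun f => f P) (psi0_pd a iv)) /= mxE.
by rewrite mul1r mulrC.
Qed.

Lemma psi0_uu P : pd (pd (psi0 a) iu) iu P = 0.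
Proof.
rewrite (congr1 (fun f => f P) (psi0_pd2 a iu iu)) /= mxE.
by rewrite mul0r mul0r.
Qed.

Lemma psi0_uv P : pd (pd (psi0 a) iu) iv P = 0.
Proof.
rewrite (congr1 (fun f => f P) (psi0_pd2 a iu iv)) /= mxE.
by rewrite mul0r mul0r.
Qed.

Lemma psi0_vv P : pd (pd (psi0 a) iv) iv P = psi0 a P / (2 * a) / (2 * a).
Proof.
rewrite (congr1 (fun f => f P) (psi0_pd2 a iv iv)) /= mxE.
rewrite mul1r; ring.
Qed.

Lemma psi0_pt u v : psi0 a (pt2 u v) = expR (v / (2 * a)).
Proof. by rewrite /psi0 /xcomp pt2_v. Qed.

Lemma fin1 (E W S1 S2 S3 S4 S5 S6 s N U V UU UV VV : R) :
  0 < a -> 0 < E -> S3 <= s -> S6 <= N ->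
  U = 0 -> V = W / (2 * a) -> UU = 0 -> UV = 0 -> VV = W / (2 * a) / (2 * a) -> W = E ->
  2 * a * (S1 * UU + 2 * S2 * UV + S3 * VV) + (a * S4 - 2 * S5) * U
  + (a * S6 - 2 * s) * V <= (a * N - s) / (2 * a) * E.
Proof.
move=> ha hE h3 h6 -> -> -> -> -> ->.
have an : a != 0 by apply: lt0r_neq0.
have -> : 2 * a * (S1 * 0 + 2 * S2 * 0 + S3 * (E / (2 * a) / (2 * a))) + (a * S4 - 2 * S5) * 0
  + (a * S6 - 2 * s) * (E / (2 * a)) = E / (2 * a) * (S3 + a * S6 - 2 * s) by field.
have -> : (a * N - s) / (2 * a) * E = E / (2 * a) * (a * N - s) by field.
apply: ler_wpM2l; first by apply: divr_ge0; [apply: ltW | apply: mulr_ge0; [|apply: ltW]].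
have : a * S6 <= a * N by rewrite ler_pM2l.
lra.
Qed.

Lemma fin2 (s v N : R) : 0 < a -> 0 <= s -> v <= s -> 0 <= N ->
  (a * N - s) / (2 * a) * expR (v / (2 * a)) <= N / 2 * expR (N / 2).
Proof.
move=> ha s0 vs N0.
have a2 : 0 < 2 * a by rewrite mulr_gt0.
have rhs0 : 0 <= N / 2 * expR (N / 2) by rewrite mulr_ge0 ?expR_ge0 ?divr_ge0.
case: (leP (a * N) s) => h.
  apply: le_trans rhs0; apply: mulr_le0_ge0; last exact: expR_ge0.
  by apply: mulr_le0_ge0; [rewrite subr_le0 | rewrite invr_ge0 ltW].
apply: ler_pM.
- by apply: divr_ge0; [rewrite subr_ge0 ltW | apply: ltW].
- exact: expR_ge0.
- rewrite ler_pdivrMr // (_ : N / 2 * (2 * a) = a * N); last by field.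
  lra.
- rewrite ler_expR ler_pdivrMr // (_ : N / 2 * (2 * a) = a * N); last by field.
  lra.
Qed.

End Aux10.

Lemma term_le (R : realType) (q d X : R) : 0 < q <= 1 -> -1 < d <= 0 -> 0 <= X -> q * (1 + d) * X <= X.
Proof.
move=> /andP[q0 q1] /andP[d0 d1] X0.
have h0 : 0 <= (1 - q) * (1 + d) by apply: mulr_ge0; lra.
have h1 : q * (1 + d) <= 1 by lra.
have : 0 <= (1 - q * (1 + d)) * X by apply: mulr_ge0; lra.
lra.
Qed.

Lemma term_le2 (R : realType) (q X : R) : 0 < q <= 1 -> 0 <= X -> X * q <= X.
Proof.
move=> /andP[q0 q1] X0.
have : 0 <= X * (1 - q) by apply: mulr_ge0; lra.
lra.
Qed.


End Helpers.
Import Helpers.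
Unset Implicit Arguments.

Lemma vf_zero (R : realType) m (z : 'rV[R]_m -> 'I_m -> R) (f : 'rV[R]_m -> R) :
  (forall y, vf z f y = 0) -> forall x, vf z (vf z f) x = 0.
Proof.
move=> Hf x; rewrite (_ : vf z f = cst 0); last by apply/funext => y; rewrite Hf.
rewrite /vf big1 // => c _; rewrite /pd derive_cst mulr0 //.
Qed.

Theorem lemma1p2 (R : realType) (n : nat) (lam del : 'I_(n.*2) -> R)
  (a kappa : R) (b : 'rV[R]_(n.*2) -> 'rV[R]_(n.*2)) :
  (4 <= n)%N ->
  (* 1 = lam_1 = lam_2 < lam_3 = lam_4 < ... < lam_{N-1} = lam_N *)
  (forall i : 'I_n, val i = 0%N -> lam (pfst i) = 1) ->
  (forall i : 'I_n, lam (pfst i) = lam (psnd i)) ->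
  (forall i j : 'I_n, val j = (val i).+1 -> lam (psnd i) < lam (pfst j)) ->
  (* a > 0, delta_l in (-1,0], delta_{2i} = delta_{2i-1} *)
  0 < a ->
  (forall l, -1 < del l /\ del l <= 0) ->
  (forall i : 'I_n, del (pfst i) = del (psnd i)) ->
  (* b : components are quadratic forms, div b = 0, <x,b(x)> = 0 = <x,b(x)>_{-1} *)
  (exists C : 'I_(n.*2) -> 'I_(n.*2) -> 'I_(n.*2) -> R,
     forall x l, xcomp (b x) l =
       \sum_(j < n.*2) \sum_(k < n.*2) C l j k * xcomp x j * xcomp x k) ->
  (forall x, \sum_(l < n.*2) pd (fun y => xcomp (b y) l) l x = 0) ->
  (forall x, \sum_(l < n.*2) xcomp x l * xcomp (b x) l = 0) ->
  (forall x, \sum_(l < n.*2) xcomp x l * xcomp (b x) l / lam l = 0) ->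
  (* kappa in (0,1] *)
  0 < kappa <= 1 ->
  (forall psi : 'rV[R]_2 -> R, isC2 psi ->
     forall eps : R, 0 < eps -> forall x : 'rV[R]_(n.*2),
     let g := fun y => psi (pt2 (sqn y) (sqnm1 lam y)) in
     let P := pt2 (sqn x) (sqnm1 lam x) in
     Leps a lam del b kappa eps g x = Ltil a lam del g x /\
     Ltil a lam del g x =
       2 * a * ( (\sum_(l < n.*2) lam l * (1 + del l) * xcomp x l ^+ 2) * pd (pd psi iu) iu P
               + 2 * (\sum_(l < n.*2) (1 + del l) * xcomp x l ^+ 2) * pd (pd psi iu) iv P
               + (\sum_(l < n.*2) (lam l)^-1 * (1 + del l) * xcomp x l ^+ 2) * pd (pd psi iv) iv P)
       + (a * (\sum_(l < n.*2) lam l * (1 + del l)) - 2 * \sum_(l < n.*2) lam l * xcomp x l ^+ 2)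
           * pd psi iu P
       + (a * (\sum_(l < n.*2) (1 + del l)) - 2 * \sum_(l < n.*2) xcomp x l ^+ 2)
           * pd psi iv P)
  /\
  (forall eps : R, 0 < eps -> forall x : 'rV[R]_(n.*2),
     let g0 := fun y => expR (sqnm1 lam y / (2 * a)) in
     Leps a lam del b kappa eps g0 x
       <= (a * (n.*2)%:R - sqn x) / (2 * a) * expR (sqnm1 lam x / (2 * a)) /\
     (a * (n.*2)%:R - sqn x) / (2 * a) * expR (sqnm1 lam x / (2 * a))
       <= (n.*2)%:R / 2 * expR ((n.*2)%:R / 2)).
Proof.
move=> hn h0 hp hs ha hdel hdelp [C hC] hdiv hxb hxbl hk.
have lge1 := lam_ge1 h0 hp hs.
have lgt0 : forall l, 0 < lam l by move=> l; exact: (lt_le_trans ltr01 (lge1 l)).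
have lne0 : forall l, lam l != 0 by move=> l; exact: lt0r_neq0.
have part1 : forall psi : 'rV[R]_2 -> R, isC2 psi ->
     forall eps : R, 0 < eps -> forall x : 'rV[R]_(n.*2),
     let g := fun y => psi (pt2 (sqn y) (sqnm1 lam y)) in
     let P := pt2 (sqn x) (sqnm1 lam x) in
     Leps a lam del b kappa eps g x = Ltil a lam del g x /\
     Ltil a lam del g x =
       2 * a * ( (\sum_(l < n.*2) lam l * (1 + del l) * xcomp x l ^+ 2) * pd (pd psi iu) iu P
               + 2 * (\sum_(l < n.*2) (1 + del l) * xcomp x l ^+ 2) * pd (pd psi iu) iv P
               + (\sum_(l < n.*2) (lam l)^-1 * (1 + del l) * xcomp x l ^+ 2) * pd (pd psi iv) iv P)
       + (a * (\sum_(l < n.*2) lam l * (1 + del l)) - 2 * \sum_(l < n.*2) lam l * xcomp x l ^+ 2)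
           * pd psi iu P
       + (a * (\sum_(l < n.*2) (1 + del l)) - 2 * \sum_(l < n.*2) xcomp x l ^+ 2)
           * pd psi iv P.
  move=> psi C2 eps heps x g P.
  have sw := schwarz C2 P.
  case: (C2) => d1 d2 c2.
  split.
    have B0 : Bop b g x = 0.
      rewrite /Bop /g (vf_comp lam d1).
      have -> : \sum_(c < n.*2) xcomp (b x) c * xcomp x c = 0.
        rewrite -[RHS](hxb x); apply: eq_bigr => c _; rewrite mulrC; reflexivity.
      have -> : \sum_(c < n.*2) xcomp (b x) c * xcomp x c * (lam c)^-1 = 0.
        rewrite -[RHS](hxbl x); apply: eq_bigr => c _; rewrite (mulrC (xcomp (b x) c)); reflexivity.
      rewrite !mulr0 addr0; reflexivity.
    have D0 : Dop lam g x = 0.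
      rewrite /Dop big1; last first.
        move=> k _; apply: big1 => l _; apply: big1 => m _.
        apply: vf_zero => y; rewrite /g (vf_comp lam d1).
        rewrite T_sum0a T_sum0b.
        rewrite !mulr0 addr0; reflexivity.
      rewrite big1; last first.
        move=> i _; apply: vf_zero => y; rewrite /g (vf_comp lam d1).
        rewrite (R_sum0a y (hp i)) (R_sum0b y (hp i)).
        rewrite !mulr0 addr0; reflexivity.
      rewrite addr0 mulr0; reflexivity.
    rewrite /Leps B0 D0 mulr0 addr0 mulr0 addr0; reflexivity.
  rewrite /Ltil /g.
  under eq_bigr do rewrite (comp_pd2 lam d1 d2) (comp_pdE lam d1).
  rewrite -/P -sw sum_shape.
  apply: eq_bigr => l _.
  move: (lne0 l); move: (lam l) => L hL.
  move: (xcomp x l) (del l) (pd psi iu P) (pd psi iv P) (pd (pd psi iu) iu P)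
    (pd (pd psi iu) iv P) (pd (pd psi iv) iv P) => X D U V UU UV VV.
  field.
  exact: hL.
split; first exact: part1.
move=> eps he x g0.
have N0 : 0 <= (n.*2)%:R :> R by exact: ler0n.
have g0E : g0 = (fun y => psi0 a (pt2 (sqn y) (sqnm1 lam y))).
  apply/funext => y; rewrite /g0 /psi0 /xcomp pt2_v; reflexivity.
rewrite g0E.
have H := part1 (psi0 a) (psi0_C2 a) eps he x.
cbv zeta in H. case: H => [-> ->].
have qb : forall l, 0 < (lam l)^-1 <= 1.
  move=> l; rewrite invr_gt0 (lgt0 l) /=; rewrite invf_le1; [exact: lge1 | exact: lgt0].
have hS3 : \sum_(l < n.*2) (lam l)^-1 * (1 + del l) * xcomp x l ^+ 2 <= sqn x.
  apply: ler_sum => l _; apply: term_le; [exact: qb | | exact: sqr_ge0].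
  by case: (hdel l) => h1 h2; rewrite h1 h2.
have hS6 : \sum_(l < n.*2) (1 + del l) <= (n.*2)%:R.
  apply: (@le_trans _ _ (\sum_(l < n.*2) (1 : R))).
    apply: ler_sum => l _; case: (hdel l) => h1 h2; lra.
  rewrite sumr_const card_ord; exact: lexx.
have hs0 : 0 <= sqn x by apply: sumr_ge0 => l _; exact: sqr_ge0.
have hvs : sqnm1 lam x <= sqn x.
  apply: ler_sum => l _; apply: term_le2; [exact: qb | exact: sqr_ge0].
split.
  apply: fin1.
  - exact: ha.
  - exact: expR_gt0.
  - exact: hS3.
  - exact: hS6.
  - exact: psi0_u.
  - exact: psi0_v.
  - exact: psi0_uu.
  - exact: psi0_uv.
  - exact: psi0_vv.
  - exact: psi0_pt.
apply: fin2.
- exact: ha.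
- exact: hs0.
- exact: hvs.
- exact: N0.
Qed.
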